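(* Let $p\ge 7$ be a prime. Then (i) $\displaystyle\sum_{k=1}^{p-1}\frac{H_{k-1}}{k^3}\equiv \sum_{k=1}^{p-1}\frac{H_k}{k^3}\equiv 0\pmod{p}$; (ii) $\displaystyle\sum_{k=1}^{p-1}\frac{H_k^3}{k}\equiv\frac{3}{2}\sum_{k=1}^{p-1}\frac{H_k^2}{k^2}\pmod{p}$; (iii) $\displaystyle\sum_{k=1}^{p-1}\frac{H_{k-1,3}}{k}\equiv \sum_{k=1}^{p-1}\frac{H_{k,3}}{k}\equiv 0\pmod{p}$; (iv) $\displaystyle\sum_{k=1}^{p-1}\frac{H_k}{k^2}\equiv \sum_{k=1}^{p-1}\frac{H_k^2}{k}\pmod{p^2}$.
   Context: For positive integers $n,m$, $H_{n,m}=\sum_{k=1}^n 1/k^m$ and $H_n=H_{n,1}$; $H_0=H_{0,m}=0$. Congruences modulo $p^e$ are taken in the ring of rationals with denominators not divisible by $p$ ($a\equiv b\pmod{p^e}$ means $(a-b)/p^e$ is a rational with denominator prime to $p$). *)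

(* Defs.v *)
From HB Require Import structures.
From mathcomp Require Import all_boot all_order all_algebra.
Set Implicit Arguments. Unset Strict Implicit. Unset Printing Implicit Defensive.
Import Order.TTheory GRing.Theory Num.Theory.
Local Open Scope ring_scope.

Definition harm (n m : nat) : rat := \sum_(1 <= k < n.+1) 1 / (k%:R ^+ m).
Definition H (n : nat) : rat := harm n 1.

(* a == b (mod p^e) in Z_(p): (a - b)/p^e has denominator prime to p *)
Definition congr_mod (p e : nat) (a b : rat) : Prop :=
  ~~ (p%:Z %| denq ((a - b) / (p%:R ^+ e)))%Z.

(* Main.v *)
Require Import Defs.
From mathcomp Require Import all_boot all_order all_algebra.
From mathcomp Require Import zify ring lra.
Import GRing.Theory Num.Theory.
Set Implicit Arguments. Unset Strict Implicit. Unset Printing Implicit Defensive.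
Local Open Scope ring_scope.

Definition pint (p : nat) (x : rat) := ~~ (p%:Z %| denq x)%Z.
Definition phi (p : nat) (x : rat) : 'F_p := (numq x)%:~R / (denq x)%:~R.
Definition rep (p : nat) (x : rat) (y : 'F_p) := pint p x /\ phi p x = y.
Arguments rep : clear implicits. Arguments pint : clear implicits. Arguments phi : clear implicits.

Lemma dvdzF p (hp : prime p) (n : int) : (p%:Z %| n)%Z = ((n%:~R : 'F_p) == 0).
Proof. exact: dvdz_pcharf (pchar_Fp hp) n. Qed.

Lemma cross (x : rat) (n d : int) : d != 0 -> x = n%:~R / d%:~R ->
  numq x * d = n * denq x.
Proof.
move=> d0 ->; apply: (@intr_inj rat); rewrite !intrM numqE.
have d0' : (d%:~R : rat) != 0 by rewrite intr_eq0.
by rewrite mulrAC divfK.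
Qed.

Lemma den_dvd (x : rat) (n d : int) : d != 0 -> x = n%:~R / d%:~R ->
  (denq x %| d)%Z.
Proof.
move=> d0 ex; have e := cross d0 ex.
have c : coprimez (denq x) (numq x) by rewrite coprimez_sym coprimezE coprime_num_den.
rewrite -(Gauss_dvdzr _ c) e; exact: dvdz_mull (dvdzz _).
Qed.

Lemma rep_frac p (hp : prime p) (n d : int) : (d%:~R : 'F_p) != 0 ->
  rep p (n%:~R / d%:~R) (n%:~R / d%:~R).
Proof.
move=> dF; have d0 : d != 0 by apply: contraNneq dF => ->.
set x := _ / _; have ex : x = _ := erefl.
have dd := den_dvd d0 ex; have e := cross d0 ex.
have dxF : ((denq x)%:~R : 'F_p) != 0.
  case/dvdzP: dd => q dq; move: dF; rewrite dq intrM; apply: contraNneq => ->.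
  by rewrite mulr0.
split; first by rewrite /pint dvdzF.
rewrite /phi; apply/eqP; rewrite eqr_div // -!intrM e; done.
Qed.

Lemma pint_den p (hp : prime p) x : pint p x -> ((denq x)%:~R : 'F_p) != 0.
Proof. by rewrite /pint dvdzF. Qed.

Lemma rep_phi p (hp : prime p) x : pint p x -> rep p x (phi p x).
Proof. by []. Qed.

Lemma repD p (hp : prime p) x y a b : rep p x a -> rep p y b -> rep p (x + y) (a + b).
Proof.
move=> [px <-] [py <-].
have dx := pint_den hp px; have dy := pint_den hp py.
have dxQ : ((denq x)%:~R : rat) != 0 by rewrite intr_eq0 denq_neq0.
have dyQ : ((denq y)%:~R : rat) != 0 by rewrite intr_eq0 denq_neq0.
have -> : x + y = (numq x * denq y + numq y * denq x)%:~R / (denq x * denq y)%:~R.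
  rewrite intrD !intrM -{1}(divq_num_den x) -{1}(divq_num_den y).
  by field; repeat (apply/andP; split).
have dF : ((denq x * denq y)%:~R : 'F_p) != 0 by rewrite intrM mulf_neq0.
have [r e] := rep_frac hp (numq x * denq y + numq y * denq x) dF; split => //; rewrite e.
rewrite /phi intrD !intrM; by field; repeat (apply/andP; split).
Qed.

Lemma repM p (hp : prime p) x y a b : rep p x a -> rep p y b -> rep p (x * y) (a * b).
Proof.
move=> [px <-] [py <-].
have dx := pint_den hp px; have dy := pint_den hp py.
have dxQ : ((denq x)%:~R : rat) != 0 by rewrite intr_eq0 denq_neq0.
have dyQ : ((denq y)%:~R : rat) != 0 by rewrite intr_eq0 denq_neq0.
have -> : x * y = (numq x * numq y)%:~R / (denq x * denq y)%:~R.
  rewrite !intrM -{1}(divq_num_den x) -{1}(divq_num_den y).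
  by field; repeat (apply/andP; split).
have dF : ((denq x * denq y)%:~R : 'F_p) != 0 by rewrite intrM mulf_neq0.
have [r e] := rep_frac hp (numq x * numq y) dF; split => //; rewrite e.
rewrite /phi !intrM; by field; repeat (apply/andP; split).
Qed.

Lemma repN p (hp : prime p) x a : rep p x a -> rep p (- x) (- a).
Proof.
move=> rx; have -> : - x = (-1) * x by rewrite mulN1r.
have -> : - a = (-1) * a by rewrite mulN1r.
apply: (repM hp) => //.
have := @rep_frac p hp (-1) 1; rewrite !divr1; apply; exact: oner_neq0.
Qed.

Lemma repB p (hp : prime p) x y a b : rep p x a -> rep p y b -> rep p (x - y) (a - b).
Proof. by move=> rx ry; apply: (repD hp) => //; apply: (repN hp). Qed.

Lemma rep_int p (hp : prime p) (n : int) : rep p n%:~R n%:~R.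
Proof. have := @rep_frac p hp n 1; rewrite !divr1; apply; exact: oner_neq0. Qed.

Lemma rep_nat p (hp : prime p) (n : nat) : rep p n%:R n%:R.
Proof. exact: (rep_int hp n). Qed.

Lemma repV p (hp : prime p) x a : rep p x a -> a != 0 -> rep p x^-1 a^-1.
Proof.
move=> [px <-] a0; have dx := pint_den hp px.
have nF : ((numq x)%:~R : 'F_p) != 0.
  by apply: contraNneq a0; rewrite /phi => ->; rewrite mul0r.
have -> : x^-1 = (denq x)%:~R / (numq x)%:~R by rewrite -{1}(divq_num_den x) invf_div.
have [r e] := rep_frac hp (denq x) nF; split => //; rewrite e.
by rewrite /phi invf_div.
Qed.

Lemma repX p (hp : prime p) x a m : rep p x a -> rep p (x ^+ m) (a ^+ m).
Proof.
move=> r; elim: m => [|m IH]; first by rewrite !expr0; exact: (rep_nat hp 1).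
by rewrite !exprS; apply: (repM hp).
Qed.

Lemma rep_sum p (hp : prime p) (r : seq nat) (F : nat -> rat) (G : nat -> 'F_p) :
  (forall i, i \in r -> rep p (F i) (G i)) ->
  rep p (\sum_(i <- r) F i) (\sum_(i <- r) G i).
Proof.
elim: r => [|i r IH] h; first by rewrite !big_nil; exact: (rep_nat hp 0).
rewrite !big_cons; apply: (repD hp).
  by apply: h; rewrite inE eqxx.
by apply: IH => j jr; apply: h; rewrite inE jr orbT.
Qed.

Lemma rep_sum_nat p (hp : prime p) (m n : nat) (F : nat -> rat) (G : nat -> 'F_p) :
  (forall i, (m <= i < n)%N -> rep p (F i) (G i)) ->
  rep p (\sum_(m <= i < n) F i) (\sum_(m <= i < n) G i).
Proof. by move=> h; apply: (rep_sum hp) => i; rewrite mem_index_iota; apply: h. Qed.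

Lemma natF p (hp : prime p) (j : nat) : ((j%:R : 'F_p) == 0) = (p %| j)%N.
Proof. by rewrite (dvdn_pcharf (pchar_Fp hp)). Qed.

Lemma rep_invX p (hp : prime p) (j m : nat) : ~~ (p %| j)%N ->
  rep p ((j%:R ^+ m)^-1) ((j%:R ^+ m)^-1).
Proof.
move=> pj; apply: (repV hp); first by apply: (repX hp); apply: (rep_nat hp).
by rewrite expf_neq0 // natF.
Qed.

Lemma pdivp p (hp : prime p) x : rep p x 0 -> pint p (x / p%:R).
Proof.
move=> [px ph]; have dx := pint_den hp px.
have : ((numq x)%:~R : 'F_p) == 0.
  by move: ph; rewrite /phi => /eqP; rewrite mulf_eq0 invr_eq0 (negbTE dx) orbF.
rewrite -dvdzF // => /dvdzP [q nq].
have p0 : (p%:R : rat) != 0 by rewrite pnatr_eq0 -lt0n prime_gt0.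
have dxQ : ((denq x)%:~R : rat) != 0 by rewrite intr_eq0 denq_neq0.
have -> : x / p%:R = q%:~R / (denq x)%:~R.
  rewrite -{1}(divq_num_den x) nq intrM.
  have -> : ((Posz p)%:~R : rat) = p%:R by [].
  by field; repeat (apply/andP; split).
by case: (rep_frac hp q dx).
Qed.

Lemma cong1 p (hp : prime p) a b c : rep p a c -> rep p b c -> congr_mod p 1 a b.
Proof.
move=> ra rb; rewrite /congr_mod expr1; apply: (pdivp hp).
by have := repB hp ra rb; rewrite subrr.
Qed.
Definition hF (p m k : nat) : 'F_p := \sum_(1 <= j < k.+1) 1 / (j%:R ^+ m).
Arguments hF : clear implicits.

Lemma oddsgn (R : pzRingType) m : odd m -> (-1) ^+ m = -1 :> R.
Proof. by move=> om; rewrite -signr_odd om expr1. Qed.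

Lemma Krev p (hp : prime p) k : (k <= p)%N -> ((p - k)%:R : 'F_p) = - k%:R.
Proof. by move=> kp; rewrite natrB // pchar_Fp_0 // sub0r. Qed.

Lemma two_neq0 p (hp : prime p) (hp7 : (7 <= p)%N) : (2%:R : 'F_p) != 0.
Proof. rewrite natF //; apply/negP => /dvdn_leq; lia. Qed.

Lemma half0 p (hp : prime p) (hp7 : (7 <= p)%N) (S : 'F_p) : S = - S -> S = 0.
Proof.
move=> e; have : 2%:R * S = 0 by rewrite mulr_natl mulr2n {1}e addNr.
by move/eqP; rewrite mulf_eq0 (negbTE (two_neq0 hp hp7)) /= => /eqP.
Qed.

Lemma hF_full p (hp : prime p) (hp7 : (7 <= p)%N) m : odd m -> hF p m p.-1 = 0.
Proof.
move=> om; apply: (half0 hp hp7); rewrite /hF prednK ?prime_gt0 //.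
rewrite {1}big_nat_rev -sumrN; apply: eq_big_nat => j /andP [j1 jp].
have -> : (1 + p - j.+1 = p - j)%N by lia.
rewrite Krev ?(ltnW jp) // exprNn oddsgn // mulN1r.
by rewrite !div1r invrN.
Qed.

Lemma hF_step p m k : (1 <= k)%N -> hF p m k = hF p m k.-1 + 1 / (k%:R ^+ m).
Proof. by case: k => // k _; rewrite /hF big_nat_recr. Qed.

Lemma hF_refl p (hp : prime p) (hp7 : (7 <= p)%N) m : odd m ->
  forall n, (n < p)%N -> hF p m (p.-1 - n) = hF p m n.
Proof.
move=> om; elim => [|n IH] np.
  by rewrite subn0 hF_full // /hF big_geq.
have e : (p.-1 - n = (p.-1 - n.+1).+1)%N by lia.
have h := @hF_step p m (p.-1 - n.+1).+1 isT.
have := IH (ltnW np); rewrite e h => {}h.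
have -> : hF p m (p.-1 - n.+1) = hF p m n - 1 / ((p.-1 - n.+1).+1%:R ^+ m).
  by rewrite -h addrK.
have -> : ((p.-1 - n.+1).+1 = p - n.+1)%N by lia.
rewrite Krev ?(ltnW np) // exprNn oddsgn // mulN1r div1r invrN opprK.
by rewrite (@hF_step p m n.+1) // div1r.
Qed.

Lemma faul4 (R : comPzRingType) n :
  30%:R * \sum_(i < n) (i%:R : R) ^+ 4 =
  n%:R * (n%:R - 1) * (2%:R * n%:R - 1) * (3%:R * n%:R ^+ 2 - 3%:R * n%:R - 1).
Proof.
elim: n => [|n IH]; first by rewrite big_ord0 mulr0 mul0r !mul0r.
rewrite big_ord_recr /= mulrDr IH -addn1 natrD.
have -> : (30%:R : R) = 30%:R by [].
ring.
Qed.

Lemma sumFp p (hp : prime p) (G : 'F_p -> 'F_p) :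
  \sum_(x : 'F_p) G x = \sum_(0 <= i < p) G i%:R.
Proof.
have -> : \sum_(x : 'F_p) G x = \sum_(i < (Zp_trunc (pdiv p)).+2) G (i%:R).
  by apply: eq_bigr => i _; rewrite natr_Zp.
rewrite -(big_mkord xpredT (fun i => G i%:R)).
have E : forall n, n = p -> \sum_(0 <= i < n) G i%:R = \sum_(0 <= i < p) G i%:R by move=> n ->.
exact: E (Fp_cast hp).
Qed.

Lemma h4 p (hp : prime p) (hp7 : (7 <= p)%N) :
  \sum_(1 <= j < p) 1 / ((j%:R : 'F_p) ^+ 4) = 0.
Proof.
have e1 : \sum_(1 <= j < p) 1 / ((j%:R : 'F_p) ^+ 4) =
   \sum_(x : 'F_p) (x^-1) ^+ 4.
  rewrite sumFp // [RHS]big_ltn ?prime_gt0 // invr0 expr0n /= add0r.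
  by apply: eq_bigr => j _; rewrite div1r exprVn.
rewrite e1 (reindex_inj (@invr_inj _)) /=. under eq_bigr do rewrite invrK. rewrite sumFp // big_mkord.
have : (30%:R : 'F_p) * \sum_(i < p) (i%:R : 'F_p) ^+ 4 = 0.
  by rewrite faul4 pchar_Fp_0 // !mul0r.
move/eqP; rewrite mulf_eq0 => /orP [|/eqP //].
rewrite natF //.
have -> : 30%N = (2 * (3 * 5))%N by [].
rewrite !Euclid_dvdM // => /orP [/dvdn_leq|/orP [/dvdn_leq|/dvdn_leq]]; lia.
Qed.

Lemma Fsym p (hp : prime p) (hp7 : (7 <= p)%N) m m' : odd m -> odd m' -> (m + m' = 4)%N ->
  \sum_(1 <= k < p) hF p m k / ((k%:R : 'F_p) ^+ m') = 0 /\
  \sum_(1 <= k < p) hF p m k.-1 / ((k%:R : 'F_p) ^+ m') = 0.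
Proof.
move=> om om' mm.
set B := \sum_(1 <= k < p) _; set A := \sum_(1 <= k < p) _.
have hA : B = A + \sum_(1 <= j < p) 1 / ((j%:R : 'F_p) ^+ 4).
  rewrite /A -big_split /=; apply: eq_big_nat => k /andP [k1 kp].
  rewrite (@hF_step p m k) // mulrDl; congr (_ + _).
  by rewrite !div1r -invfM -exprD mm.
have hR : B = - A.
  rewrite /B big_nat_rev -sumrN; apply: eq_big_nat => k /andP [k1 kp].
  have -> : (1 + p - k.+1 = p.-1 - k.-1)%N by lia.
  rewrite hF_refl //; last by lia.
  have -> : (p.-1 - k.-1 = p - k)%N by lia.
  by rewrite Krev ?(ltnW kp) // exprNn oddsgn // mulN1r invrN mulrN.
rewrite h4 // addr0 in hA.
have A0 : A = 0 by apply: (half0 hp hp7); rewrite -hR hA.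
by split => //; rewrite hA.
Qed.

Lemma Fii p (hp : prime p) (hp7 : (7 <= p)%N) :
  \sum_(1 <= k < p) (hF p 1 k) ^+ 3 / (k%:R : 'F_p) =
  (3%:R / 2%:R) * \sum_(1 <= k < p) (hF p 1 k) ^+ 2 / ((k%:R : 'F_p) ^+ 2).
Proof.
set U := \sum_(1 <= k < p) _; set V := \sum_(1 <= k < p) _.
have [B0 _] := @Fsym p hp hp7 1 3 isT isT erefl.
set B := \sum_(1 <= k < p) _ in B0.
have e : U = \sum_(1 <= k < p) - ((hF p 1 k) ^+ 3 / (k%:R : 'F_p) - 3%:R * ((hF p 1 k) ^+ 2 / ((k%:R : 'F_p) ^+ 2)) + 3%:R * (hF p 1 k / ((k%:R : 'F_p) ^+ 3)) - 1 / ((k%:R : 'F_p) ^+ 4)).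
  rewrite /U big_nat_rev; apply: eq_big_nat => k /andP [k1 kp].
  have -> : (1 + p - k.+1 = p.-1 - k.-1)%N by lia.
  rewrite hF_refl //; last by lia.
  have -> : (p.-1 - k.-1 = p - k)%N by lia.
  rewrite Krev ?(ltnW kp) // (@hF_step p 1 k) //.
  have k0 : (k%:R : 'F_p) != 0 by rewrite natF //; apply/negP => /dvdn_leq; lia.
  set h := hF p 1 k.-1.
  field; by rewrite ?oppr_eq0 k0.
rewrite sumrN sumrB big_split sumrB /= -!mulr_sumr -/U -/V -/B in e.
have h4' : \sum_(1 <= j < p) ((j%:R : 'F_p) ^+ 4)^-1 = 0.
  by rewrite -[RHS](h4 hp hp7); apply: eq_bigr => *; rewrite div1r.
rewrite B0 h4' mulr0 mulr0 addr0 subr0 in e.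
have t0 := two_neq0 hp hp7.
have : 2%:R * U = 3%:R * V by rewrite mulr_natl mulr2n {1}e; ring.
move=> e2; apply: (mulfI t0); rewrite e2; field; by repeat (apply/andP; split).
Qed.


Lemma ndvd p k : (0 < k < p)%N -> ~~ (p %| k)%N.
Proof. move=> /andP [k0 kp]; apply/negP => /dvdn_leq; lia. Qed.

Lemma rep_invn p (hp : prime p) j : ~~ (p %| j)%N -> rep p (j%:R)^-1 (j%:R)^-1.
Proof. by move=> pj; have := rep_invX hp 1 pj; rewrite !expr1. Qed.

Lemma rep_harm p (hp : prime p) k m : (k < p)%N -> rep p (harm k m) (hF p m k).
Proof.
move=> kp; apply: (rep_sum_nat hp) => j /andP [j1 jk].
rewrite !div1r; apply: rep_invX => //; apply: ndvd; lia.
Qed.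

Lemma rep_H p (hp : prime p) k : (k < p)%N -> rep p (H k) (hF p 1 k).
Proof. exact: rep_harm. Qed.

Lemma partsI p (hp : prime p) (hp7 : (7 <= p)%N) :
  (congr_mod p 1 (\sum_(1 <= k < p) H k.-1 / (k%:R ^+ 3)) 0 /\
   congr_mod p 1 (\sum_(1 <= k < p) H k / (k%:R ^+ 3)) 0) /\
  congr_mod p 1 (\sum_(1 <= k < p) (H k) ^+ 3 / k%:R)
                ((3%:R / 2%:R) * \sum_(1 <= k < p) (H k) ^+ 2 / (k%:R ^+ 2)) /\
  (congr_mod p 1 (\sum_(1 <= k < p) harm k.-1 3 / k%:R) 0 /\
   congr_mod p 1 (\sum_(1 <= k < p) harm k 3 / k%:R) 0).
Proof.
have r0 : rep p 0 0 by exact: (rep_nat hp 0).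
have [B1 A1] := Fsym hp hp7 (m := 1) (m' := 3) isT isT erefl.
have [B3 A3] := Fsym hp hp7 (m := 3) (m' := 1) isT isT erefl.
split; [split|split; [|split]].
- apply: (cong1 hp _ r0); rewrite -A1; apply: (rep_sum_nat hp) => k /andP [k1 kp].
  apply: (repM hp); first by apply: rep_H; lia.
  by apply: rep_invX => //; apply: ndvd; lia.
- apply: (cong1 hp _ r0); rewrite -B1; apply: (rep_sum_nat hp) => k /andP [k1 kp].
  apply: (repM hp); first by apply: rep_H; lia.
  by apply: rep_invX => //; apply: ndvd; lia.
- apply: (cong1 hp (c := \sum_(1 <= k < p) (hF p 1 k) ^+ 3 / (k%:R : 'F_p))).
    apply: (rep_sum_nat hp) => k /andP [k1 kp].
    apply: (repM hp); first by apply: (repX hp); apply: rep_H; lia.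
    by apply: rep_invn => //; apply: ndvd; lia.
  rewrite Fii //; apply: (repM hp).
    apply: (repM hp); first exact: rep_nat.
    by apply: (repV hp); [exact: rep_nat| exact: two_neq0].
  apply: (rep_sum_nat hp) => k /andP [k1 kp].
  apply: (repM hp); first by apply: (repX hp); apply: rep_H; lia.
  by apply: rep_invX => //; apply: ndvd; lia.
- apply: (cong1 hp _ r0); rewrite -A3; apply: (rep_sum_nat hp) => k /andP [k1 kp].
  rewrite expr1; apply: (repM hp); first by apply: rep_harm; lia.
  by apply: rep_invn => //; apply: ndvd; lia.
- apply: (cong1 hp _ r0); rewrite -B3; apply: (rep_sum_nat hp) => k /andP [k1 kp].
  rewrite expr1; apply: (repM hp); first by apply: rep_harm; lia.
  by apply: rep_invn => //; apply: ndvd; lia.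
Qed.

Lemma natQ0 (k : nat) : (0 < k)%N -> (k%:R : rat) != 0.
Proof. by rewrite pnatr_eq0 -lt0n. Qed.

Lemma cube_id n : H n ^+ 3 =
  3%:R * \sum_(1 <= k < n.+1) (H k) ^+ 2 / k%:R
  - 3%:R * \sum_(1 <= k < n.+1) H k / (k%:R ^+ 2) + harm n 3.
Proof.
elim: n => [|n IH].
  by rewrite /H /harm !big_geq // expr0n /= mulr0 subrr addr0.
have hs : H n.+1 = H n + (n.+1%:R)^-1 by rewrite /H /harm big_nat_recr //= expr1 div1r.
have h3 : harm n.+1 3 = harm n 3 + (n.+1%:R ^+ 3)^-1 by rewrite /harm big_nat_recr //= div1r.
rewrite (big_nat_recr n.+1) // (big_nat_recr n.+1) //= h3 hs.
have -> : harm n 3 = H n ^+ 3 - 3%:R * \sum_(1 <= k < n.+1) (H k) ^+ 2 / k%:R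
  + 3%:R * \sum_(1 <= k < n.+1) H k / (k%:R ^+ 2) by rewrite IH; ring.
have n0 := natQ0 (ltn0Sn n).
field; by rewrite -(natrD _ 1 n).
Qed.

Lemma Hpair p (hp : prime p) : 2%:R * H p.-1 =
  p%:R * \sum_(1 <= k < p) ((k * (p - k))%:R)^-1.
Proof.
rewrite /H /harm prednK ?prime_gt0 // mulr_natl mulr2n {2}big_nat_rev -big_split.
rewrite mulr_sumr; apply: eq_big_nat => k /andP [k1 kp]. rewrite /=.
have -> : (1 + p - k.+1 = p - k)%N by lia.
have k0 := natQ0 k1.
have pk0 : ((p - k)%:R : rat) != 0 by apply: natQ0; lia.
rewrite natrM; move: pk0; rewrite natrB ?(ltnW kp) // => pk0.
field; by rewrite k0 pk0.
Qed.

Definition cc (p k : nat) : rat :=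
  (3%:R * k%:R ^+ 2 - 3%:R * p%:R * k%:R + p%:R ^+ 2) * (((k * (p - k))%:R) ^+ 3)^-1.

Lemma H3pair p (hp : prime p) : 2%:R * harm p.-1 3 =
  p%:R * \sum_(1 <= k < p) cc p k.
Proof.
rewrite /harm prednK ?prime_gt0 // mulr_natl mulr2n {2}big_nat_rev -big_split.
rewrite mulr_sumr; apply: eq_big_nat => k /andP [k1 kp]. rewrite /=.
have -> : (1 + p - k.+1 = p - k)%N by lia.
have k0 := natQ0 k1.
have pk0 : ((p - k)%:R : rat) != 0 by apply: natQ0; lia.
rewrite /cc natrM; move: pk0; rewrite natrB ?(ltnW kp) // => pk0.
field; by rewrite k0 pk0.
Qed.

Lemma rep_cc p (hp : prime p) k : (0 < k < p)%N ->
  rep p (cc p k) (- 3%:R * ((k%:R : 'F_p) ^+ 4)^-1).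
Proof.
move=> /andP [k1 kp].
have pk : ~~ (p %| k * (p - k))%N.
  by rewrite Euclid_dvdM // negb_or !ndvd //; apply/andP; split; lia.
have r := repM hp (repD hp (repB hp (repM hp (rep_nat hp 3) (repX hp 2 (rep_nat hp k)))
   (repM hp (repM hp (rep_nat hp 3) (rep_nat hp p)) (rep_nat hp k))) (repX hp 2 (rep_nat hp p)))
   (rep_invX hp 3 pk).
rewrite /cc; case: r => r1 r2; split => //; rewrite r2.
have k0 : (k%:R : 'F_p) != 0 by rewrite natF // ndvd //; apply/andP; split; lia.
rewrite natrM Krev ?(ltnW kp) // pchar_Fp_0 //.
field; by rewrite oppr_eq0 k0.
Qed.

Lemma partIV p (hp : prime p) (hp7 : (7 <= p)%N) :
  congr_mod p 2 (\sum_(1 <= k < p) H k / (k%:R ^+ 2))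
                (\sum_(1 <= k < p) (H k) ^+ 2 / k%:R).
Proof.
set A := \sum_(1 <= k < p) _; set B := \sum_(1 <= k < p) _.
set P : rat := p%:R.
set s1 := \sum_(1 <= k < p) ((k * (p - k))%:R)^-1 : rat.
set s3 := \sum_(1 <= k < p) cc p k.
have pkk : forall k, (1 <= k < p)%N -> ~~ (p %| k * (p - k))%N.
  move=> k /andP [k1 kp].
  by rewrite Euclid_dvdM // negb_or !ndvd //; apply/andP; split; lia.
have [ps1 _] : rep p s1 (\sum_(1 <= k < p) ((k * (p - k))%:R)^-1).
  by apply: (rep_sum_nat hp) => k hk; apply: rep_invn => //; apply: pkk.
have rs3 : rep p s3 0.
  have r := rep_sum_nat hp (fun k hk => rep_cc hp (k := k) hk).
  have h4' : \sum_(1 <= j < p) ((j%:R : 'F_p) ^+ 4)^-1 = 0.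
    by rewrite -[RHS](h4 hp hp7); apply: eq_bigr => *; rewrite div1r.
  by rewrite -mulr_sumr h4' mulr0 in r.
have pe := pdivp hp rs3.
set e := s3 / P in pe.
have P0 : P != 0 by apply: natQ0; exact: prime_gt0.
have hH := Hpair hp; have h3 := H3pair hp.
have cube := cube_id p.-1; rewrite prednK ?prime_gt0 // -/A -/B in cube.
have eq : (A - B) / P ^+ 2 = (e * 2%:R^-1 - P * s1 ^+ 3 * (2%:R^-1) ^+ 3) * 3%:R^-1.
  have eAB : A - B = (harm p.-1 3 - H p.-1 ^+ 3) / 3%:R by rewrite cube; field.
  have two0 : (2%:R : rat) != 0 by [].
  have eH : H p.-1 = P * s1 / 2%:R by apply: (mulfI two0); rewrite hH; change (P * s1 = 2%:R * (P * s1 / 2%:R)); field.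
  have e3 : harm p.-1 3 = P * (e * P) / 2%:R.
    apply: (mulfI two0); rewrite h3 /e divfK //. change (P * s3 = 2%:R * (P * s3 / 2%:R)); field.
  by [].
  apply: (@etrans _ _ ((harm p.-1 3 - H p.-1 ^+ 3) / 3%:R / P ^+ 2)); first by congr (_ / _); exact: eAB.
  rewrite eH e3; field; exact: P0.
rewrite /congr_mod eq.
have r := repM hp (repB hp (repM hp (rep_phi hp pe) (rep_invn hp (j := 2) (ndvd (p := p) _)))
  (repM hp (repM hp (rep_nat hp p) (repX hp 3 (rep_phi hp ps1)))
    (repX hp 3 (rep_invn hp (j := 2) (ndvd (p := p) _)))))
  (rep_invn hp (j := 3) (ndvd (p := p) _)).
by case: r => //; lia.
Qed.

Unset Implicit Arguments.

Theorem lemma2p3 (p : nat) (hp : prime p) (hp7 : (7 <= p)%N) :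
  (* (i) *)
  (congr_mod p 1 (\sum_(1 <= k < p) H k.-1 / (k%:R ^+ 3)) 0 /\
   congr_mod p 1 (\sum_(1 <= k < p) H k / (k%:R ^+ 3)) 0) /\
  (* (ii) *)
  congr_mod p 1 (\sum_(1 <= k < p) (H k) ^+ 3 / k%:R)
                ((3%:R / 2%:R) * \sum_(1 <= k < p) (H k) ^+ 2 / (k%:R ^+ 2)) /\
  (* (iii) *)
  (congr_mod p 1 (\sum_(1 <= k < p) harm k.-1 3 / k%:R) 0 /\
   congr_mod p 1 (\sum_(1 <= k < p) harm k 3 / k%:R) 0) /\
  (* (iv) *)
  congr_mod p 2 (\sum_(1 <= k < p) H k / (k%:R ^+ 2))
                (\sum_(1 <= k < p) (H k) ^+ 2 / k%:R).
Proof.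
have [I [II III]] := partsI hp hp7.
by split; [|split; [|split]] => //; apply: partIV.
Qed.
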